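(* Let $k\ge 2$ be an integer, $a=6k+1$, $b=2a-6$, $c=2a-2$, $S=\{a,b,c\}$, $G=\langle S\rangle$. Define, for $i\in[0,k-2]$, $A_{i,k}=\{(2i+1)a,\ (2i+2)a-6(i+1),\ (2i+2)a-6(i+1)+4\}\cup[(2i+2)a-6i,\,(2i+2)a-2]_2$, $B_{i,k}=\{(2i+2)a,\ (2i+3)a-6(i+1),\ (2i+3)a-6(i+1)+4\}\cup[(2i+3)a-6i,\,(2i+3)a-2]_2$; further $A_{k-1,k}=\{(2k-1)a,\ 2ka-6k,\ 2ka-6k+4\}\cup[2ka-6k+6,\,2ka-2]_2$, $B_{k-1,k}=\{2ka,\ (2k+1)a-6k,\ (2k+1)a-6k+4\}\cup[(2k+1)a-6k+6,\,(2k+1)a-8]_2\cup[(2k+1)a-6,(2k+1)a-4]\cup[(2k+1)a-2,(2k+1)a]$, $D_{k,k}=[(2k+1)a+1,\,(2k+1)a+1+6k-8]_2\cup[(2k+2)a-6,(2k+2)a-4]\cup[(2k+2)a-2,(2k+2)a]$; and for $i\in[k+1,2k-1]$, $C_{i,k}=[2ia+1,\,2ia+1+2(6k-3i-4)]_2\cup[2ia+1+2(6k-3i-3),\,2ia+3+2(6k-3i-3)]\cup[2ia+5+2(6k-3i-3),\,(2i+1)a]$, $D_{i,k}=[(2i+1)a+1,\,(2i+1)a+1+2(6k-3i-4)]_2\cup[(2i+1)a+1+2(6k-3i-3),\,(2i+1)a+3+2(6k-3i-3)]\cup[(2i+1)a+5+2(6k-3i-3),\,(2i+2)a]$. Let $H_{5,k}=\{0\}\cup\bigcup_{i=0}^{k-1}(A_{i,k}\cup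 B_{i,k})\cup D_{k,k}\cup\bigcup_{i=k+1}^{2k-1}(C_{i,k}\cup D_{i,k})\cup[(4k-1)a+5,\infty[$. Then: (1) $C_{2k-1,k}=[(4k-2)a+1,(4k-2)a+3]\cup[(4k-2)a+5,(4k-1)a]$ and $D_{2k-1,k}=[(4k-1)a+1,(4k-1)a+3]\cup[(4k-1)a+5,4ka]$; (2) $x\in G$ if and only if $x=(p+2q)a+4r-6q$ for some $p,q,r\in\mathbb{N}$ with $0\le r\le q$; (3) $H_{5,k}\subseteq G$; (4) $G\subseteq H_{5,k}$; (5) $A_{i,k}<B_{i,k}$ for $i\in[0,k-1]$; $B_{i,k}<A_{i+1,k}$ for $i\in[0,k-2]$; $B_{k-1,k}<D_{k,k}$; $C_{i,k}<D_{i,k}$ for $i\in[k+1,2k-1]$; $D_{i,k}<C_{i+1,k}$ for $i\in[k+1,2k-2]$; (6) $H_{5,k}$ is a $3$-permutation numerical semigroup.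
   Context: $\mathbb{N}=\{0,1,2,\dots\}$. A numerical semigroup is a submonoid $G$ of $(\mathbb{N},+,0)$ with $\mathbb{N}\setminus G$ finite; $\langle S\rangle$ is the submonoid generated by $S$. Writing the elements of a numerical semigroup as $0=g_0<g_1<g_2<\cdots$, it is an $n$-permutation numerical semigroup if it is generated by $\{g_1,\dots,g_n\}$ and for every $k\in\mathbb{N}$ the tuple $(g_{kn+1}\bmod n,\dots,g_{kn+n}\bmod n)$ contains exactly one representative of each residue class mod $n$. Notation: $[u,v]=\{x\in\mathbb{N}:u\le x\le v\}$ and $[u,v]_2=\{x\in[u,v]:x\equiv u\pmod 2\}$ (both empty if $u>v$); $[u,\infty[=\{x\in\mathbb{N}:x\ge u\}$. For nonempty $X,Y\subseteq\mathbb{N}$, $X<Y$ means $x<y$ for all $x\in X,y\in Y$. *)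

(* Defs.v *)
(* subsets of N are predicates nat -> Prop; interval endpoints
   are computed in Z so that no truncated subtraction occurs. *)
From Stdlib Require Import ZArith Lia.
Open Scope Z_scope.

Definition nset := nat -> Prop.

Definition Icc (u v : Z) : nset := fun x => u <= Z.of_nat x <= v.
Definition Icc2 (u v : Z) : nset :=
  fun x => u <= Z.of_nat x <= v /\ Z.of_nat x mod 2 = u mod 2.
Definition Ici (u : Z) : nset := fun x => u <= Z.of_nat x.
Definition set1 (p : Z) : nset := fun x => Z.of_nat x = p.
Definition set3 (p q r : Z) : nset :=
  fun x => Z.of_nat x = p \/ Z.of_nat x = q \/ Z.of_nat x = r.
Definition setU (X Y : nset) : nset := fun x => X x \/ Y x.
Definition set_eq (X Y : nset) : Prop := forall x, X x <-> Y x.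
Definition set_sub (X Y : nset) : Prop := forall x, X x -> Y x.
Definition set_lt (X Y : nset) : Prop :=
  (exists x, X x) /\ (exists y, Y y) /\ forall x y, X x -> Y y -> (x < y)%nat.

Inductive gen (S : nset) : nset :=
| gen0 : gen S 0%nat
| gen_in x : S x -> gen S x
| gen_add x y : gen S x -> gen S y -> gen S (x + y)%nat.

Definition submonoid (G : nset) : Prop :=
  G 0%nat /\ forall x y, G x -> G y -> G (x + y)%nat.

Definition numerical_semigroup (G : nset) : Prop :=
  submonoid G /\ exists l : list nat, forall x, ~ G x -> List.In x l.

Definition perm_num_semigroup (n : nat) (G : nset) : Prop :=
  numerical_semigroup G /\
  exists g : nat -> nat,
    (forall j, (g j < g (S j))%nat) /\
    (forall x, G x <-> exists j, g j = x) /\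
    (forall x, G x <-> gen (fun y => exists i, (1 <= i <= n)%nat /\ g i = y) x) /\
    (forall m r, (r < n)%nat ->
       exists! i, (1 <= i <= n)%nat /\ Nat.modulo (g (m * n + i)%nat) n = r).

Section Sets.
Variable k : Z.
Definition a := 6 * k + 1.
Definition b := 2 * a - 6.
Definition c := 2 * a - 2.
Definition S3 : nset := set3 a b c.
Definition G : nset := gen S3.

Definition Agen (i : Z) : nset :=
  setU (set3 ((2*i+1)*a) ((2*i+2)*a - 6*(i+1)) ((2*i+2)*a - 6*(i+1) + 4))
       (Icc2 ((2*i+2)*a - 6*i) ((2*i+2)*a - 2)).
Definition Bgen (i : Z) : nset :=
  setU (set3 ((2*i+2)*a) ((2*i+3)*a - 6*(i+1)) ((2*i+3)*a - 6*(i+1) + 4))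
       (Icc2 ((2*i+3)*a - 6*i) ((2*i+3)*a - 2)).
Definition Alast : nset :=
  setU (set3 ((2*k-1)*a) (2*k*a - 6*k) (2*k*a - 6*k + 4))
       (Icc2 (2*k*a - 6*k + 6) (2*k*a - 2)).
Definition Blast : nset :=
  setU (set3 (2*k*a) ((2*k+1)*a - 6*k) ((2*k+1)*a - 6*k + 4))
  (setU (Icc2 ((2*k+1)*a - 6*k + 6) ((2*k+1)*a - 8))
  (setU (Icc ((2*k+1)*a - 6) ((2*k+1)*a - 4))
        (Icc ((2*k+1)*a - 2) ((2*k+1)*a)))).
Definition A (i : Z) : nset := if i =? k - 1 then Alast else Agen i.
Definition B (i : Z) : nset := if i =? k - 1 then Blast else Bgen i.
Definition Dkk : nset :=
  setU (Icc2 ((2*k+1)*a + 1) ((2*k+1)*a + 1 + 6*k - 8))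
  (setU (Icc ((2*k+2)*a - 6) ((2*k+2)*a - 4))
        (Icc ((2*k+2)*a - 2) ((2*k+2)*a))).
Definition C (i : Z) : nset :=
  setU (Icc2 (2*i*a + 1) (2*i*a + 1 + 2*(6*k - 3*i - 4)))
  (setU (Icc (2*i*a + 1 + 2*(6*k - 3*i - 3)) (2*i*a + 3 + 2*(6*k - 3*i - 3)))
        (Icc (2*i*a + 5 + 2*(6*k - 3*i - 3)) ((2*i+1)*a))).
Definition D (i : Z) : nset :=
  setU (Icc2 ((2*i+1)*a + 1) ((2*i+1)*a + 1 + 2*(6*k - 3*i - 4)))
  (setU (Icc ((2*i+1)*a + 1 + 2*(6*k - 3*i - 3)) ((2*i+1)*a + 3 + 2*(6*k - 3*i - 3)))
        (Icc ((2*i+1)*a + 5 + 2*(6*k - 3*i - 3)) ((2*i+2)*a))).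

Definition H5 : nset := fun x =>
  x = 0%nat \/
  (exists i, 0 <= i <= k - 1 /\ (A i x \/ B i x)) \/
  Dkk x \/
  (exists i, k + 1 <= i <= 2*k - 1 /\ (C i x \/ D i x)) \/
  Ici ((4*k-1)*a + 5) x.
End Sets.

(* Main.v *)
Require Import Defs.
From Stdlib Require Import ZArith Lia Classical ClassicalEpsilon Wf_nat List.
Open Scope Z_scope.


Definition Gc (k X : Z) : Prop := exists Q e, 0 <= Q /\ 0 <= e <= 3*Q /\ e <> 3*Q-1 /\
  (X = 2*Q*a k - 2*e \/ X = (2*Q+1)*a k - 2*e).

Definition PQR (k : Z) (x : nat) : Prop := exists p q r : nat, (r <= q)%nat /\
       Z.of_nat x = (Z.of_nat p + 2 * Z.of_nat q) * a k + 4 * Z.of_nat r - 6 * Z.of_nat q.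

Lemma gen_mul (S : nset) y n : S y -> gen S (n * y)%nat.
Proof. intro H; induction n as [|n IH]; simpl. apply gen0. apply gen_add; auto. apply gen_in; auto. Qed.

Lemma G_PQR k (hk : 2 <= k) x : G k x <-> PQR k x.
Proof.
  unfold G, PQR; split.
  - induction 1 as [|x Hx|x y _ [p1 [q1 [r1 [H1 E1]]]] _ [p2 [q2 [r2 [H2 E2]]]]].
    + exists 0%nat, 0%nat, 0%nat; lia.
    + unfold S3, set3, b, c, a in Hx; unfold a. destruct Hx as [Hx|[Hx|Hx]].
      * exists 1%nat, 0%nat, 0%nat; rewrite Hx. lia.
      * exists 0%nat, 1%nat, 0%nat; rewrite Hx. lia.
      * exists 0%nat, 1%nat, 1%nat; rewrite Hx. lia.
    + exists (p1+p2)%nat, (q1+q2)%nat, (r1+r2)%nat; split; [lia|].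
      rewrite Nat2Z.inj_add, E1, E2, !Nat2Z.inj_add. ring.
  - intros [p [q [r [Hr E]]]].
    assert (ha : a k = 6*k+1) by reflexivity.
    set (an := Z.to_nat (a k)). set (bn := Z.to_nat (b k)). set (cn := Z.to_nat (c k)).
    assert (x = p*an + (q-r)*bn + r*cn)%nat as ->.
    { apply Nat2Z.inj. rewrite !Nat2Z.inj_add, !Nat2Z.inj_mul, Nat2Z.inj_sub by lia.
      unfold an, bn, cn, b, c. rewrite !Z2Nat.id by lia. rewrite E. ring. }
    apply gen_add; [apply gen_add|]; apply gen_mul; unfold S3, set3, an, bn, cn;
      rewrite Z2Nat.id; unfold b, c in *; lia.
Qed.

Lemma PQR_Gc k (hk : 2 <= k) x : PQR k x <-> Gc k (Z.of_nat x).
Proof.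
  unfold PQR, Gc; split.
  - intros [p [q [r [Hr E]]]].
    set (P := Z.of_nat p) in *. set (Qz := Z.of_nat q) in *. set (R := Z.of_nat r) in *.
    assert (0 <= P) by lia. assert (R <= Qz) by lia. assert (0 <= R) by lia.
    assert (exists p', P = 2*p' \/ P = 2*p'+1) as [p' [Hp|Hp]] by (exists (P/2); pose proof (Z_div_mod_eq_full P 2); pose proof (Z.mod_pos_bound P 2 ltac:(lia)); lia).
    + exists (p' + Qz), (3*Qz - 2*R). split; [lia|]. split; [lia|]. split; [lia|].
      left. rewrite E, Hp. ring.
    + exists (p' + Qz), (3*Qz - 2*R). split; [lia|]. split; [lia|]. split; [lia|].
      right. rewrite E, Hp. ring.
  - intros [Q [e [HQ [He [He' E]]]]].
    assert (exists m t, e = 3*m + t /\ 0 <= t < 3 /\ 0 <= m) as [m [t [Et [Ht Hm]]]].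
    { exists (e / 3), (e mod 3). pose proof (Z_div_mod_eq_full e 3); pose proof (Z.mod_pos_bound e 3 ltac:(lia)). assert (0 <= e/3) by (apply Z.div_pos; lia). lia. }
    assert (Hs: exists s, 0 <= s <= 1 /\ Z.of_nat x = (2*Q+s)*a k - 2*e).
    { destruct E as [E|E]; [exists 0|exists 1]; rewrite E; split; try lia; ring. }
    destruct Hs as [s [Hs E2]].
    assert (t = 0 \/ t = 1 \/ t = 2) as [ -> | [ -> | -> ] ] by lia.
    + exists (Z.to_nat (2*Q + s - 2*m)), (Z.to_nat m), 0%nat. split; [lia|].
      rewrite !Z2Nat.id by lia. rewrite E2, Et. ring.
    + exists (Z.to_nat (2*Q + s - 2*m - 2)), (Z.to_nat (m+1)), 1%nat. split; [lia|].
      rewrite !Z2Nat.id by lia. rewrite E2, Et. lia.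
    + exists (Z.to_nat (2*Q + s - 2*m - 4)), (Z.to_nat (m+2)), 2%nat. split; [lia|].
      rewrite !Z2Nat.id by lia. rewrite E2, Et. lia.
Qed.

Lemma icc2E u v x : Icc2 u v x -> exists t, 0 <= t /\ Z.of_nat x = u + 2*t /\ u + 2*t <= v.
Proof. unfold Icc2; intros [H1 H2]. exists ((Z.of_nat x - u)/2).
  pose proof (Z_div_mod_eq_full (Z.of_nat x - u) 2).
  pose proof (Z.mod_pos_bound (Z.of_nat x - u) 2 ltac:(lia)).
  assert ((Z.of_nat x - u) mod 2 = 0).
  { rewrite Zminus_mod, H2, Z.sub_diag. reflexivity. }
  split; [apply Z.div_pos; lia|]. lia. Qed.

Lemma icc2I u v x t : Z.of_nat x = u + 2*t -> u <= Z.of_nat x <= v -> Icc2 u v x.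
Proof. intros E H. split; auto. rewrite E. rewrite (Z.mul_comm 2 t), Z_mod_plus_full. reflexivity. Qed.

Ltac gcw Q e := exists Q, e; split; [lia|]; split; [lia|]; split; [lia|]; first [left; lia | right; lia].

Definition CDc (k i r : Z) : Prop :=
  1 <= r <= a k /\ ((exists t, 0 <= t /\ r = 1 + 2*t /\ r <= 12*k - 6*i - 7) \/
                    (12*k - 6*i - 5 <= r <= 12*k - 6*i - 3) \/ 12*k - 6*i - 1 <= r).

Lemma par (r : Z) : exists u, r = 2*u \/ r = 2*u+1.
Proof. exists (r/2). pose proof (Z_div_mod_eq_full r 2). pose proof (Z.mod_pos_bound r 2 ltac:(lia)). lia. Qed.

Lemma CD_gc k (hk : 2 <= k) i s r : k <= i <= 2*k-1 -> 0 <= s <= 1 -> (i = k -> s = 1) ->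
  CDc k i r -> Gc k ((2*i+s)*a k + r).
Proof.
  intros Hi Hs Hik [Hr Hc]. assert (ha : a k = 6*k+1) by reflexivity.
  assert (Hik' : i = k /\ s = 1 \/ k < i) by (destruct (Z.eq_dec i k); [left; split; auto|right; lia]). clear Hik.
  destruct Hc as [[t [Ht [Hrt Hrt2]]]|Hc];
  destruct (par r) as [u [Hu|Hu]].
  all: assert (s = 0 \/ s = 1) as [ -> | -> ] by lia.
  all: try (gcw (i+1) (6*k-u+1)); try (gcw i (3*k-u)); try (gcw (i+1) (3*k-u)); lia.
Qed.

Lemma CD_H5 k (hk : 2 <= k) i s (x : nat) r : k <= i <= 2*k-1 -> 0 <= s <= 1 -> (i = k -> s = 1) ->
  CDc k i r -> Z.of_nat x = (2*i+s)*a k + r -> H5 k x.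
Proof.
  intros Hi Hs Hik [Hr Hc] E. assert (ha : a k = 6*k+1) by reflexivity.
  unfold H5. right; right.
  destruct (Z.eq_dec i k) as [->|Hne].
  - rewrite Hik in E by reflexivity. left. unfold Dkk, setU, Icc.
    destruct Hc as [[t [Ht [Hrt Hrt2]]]|[Hc|Hc]].
    + left. apply (icc2I _ _ _ t); lia.
    + right; left; lia.
    + right; right; lia.
  - right; left. exists i. split; [lia|].
    assert (s = 0 \/ s = 1) as [-> | ->] by lia.
    + left. unfold C, setU, Icc.
      destruct Hc as [[t [Ht [Hrt Hrt2]]]|[Hc|Hc]].
      * left. apply (icc2I _ _ _ t); lia.
      * right; left; lia.
      * right; right; lia.
    + right. unfold D, setU, Icc.
      destruct Hc as [[t [Ht [Hrt Hrt2]]]|[Hc|Hc]].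
      * left. apply (icc2I _ _ _ t); lia.
      * right; left; lia.
      * right; right; lia.
Qed.

Lemma tail_gc k (hk : 2 <= k) X : (4*k-1)*a k + 5 <= X -> Gc k X.
Proof.
  intro HX. assert (ha : a k = 6*k+1) by reflexivity.
  assert (exists j r, X - 1 = a k * j + r /\ 0 <= r < a k) as [j [r [E Hr]]].
  { exists ((X-1)/a k), ((X-1) mod a k). split. apply Z_div_mod_eq_full. apply Z.mod_pos_bound; lia. }
  assert (Hj : 4*k-1 <= j).
  { destruct (Z_lt_le_dec j (4*k-1)); auto.
    assert (a k * j <= a k * (4*k-2)) by (apply Z.mul_le_mono_nonneg_l; lia). lia. }
  destruct (par j) as [J [HJ|HJ]]; subst j; destruct (par r) as [u [Hu|Hu]]; subst r.
  - gcw J (3*k-u).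
  - gcw (J+1) (6*k-u).
  - gcw (J+1) (3*k-u).
  - assert (J = 2*k-1 -> u <> 1) by lia. gcw (J+1) (6*k-u).
Qed.

Lemma CDc_odd k (hk : 2 <= k) i e : i <= 2*k-1 -> 0 <= e <= 3*k -> CDc k i (a k - 2*e).
Proof.
  intros Hi He. assert (ha : a k = 6*k+1) by reflexivity. split; [lia|].
  destruct (Z_le_gt_dec (a k - 2*e) (12*k-6*i-7)).
  - left. exists (3*k-e). lia.
  - destruct (Z_le_gt_dec (a k - 2*e) (12*k-6*i-3)).
    + right; left; lia.
    + right; right; lia.
Qed.

Lemma CDc_even k (hk : 2 <= k) i e : i <= 2*k-1 -> 3*k+1 <= e <= 3*i+3 -> e <> 3*i+2 -> CDc k i (2*a k - 2*e).
Proof.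
  intros Hi He He'. assert (ha : a k = 6*k+1) by reflexivity. split; [lia|].
  destruct (Z.eq_dec e (3*i+3)).
  - right; left; lia.
  - right; right; lia.
Qed.

Lemma H5_gc k (hk : 2 <= k) x : H5 k x -> Gc k (Z.of_nat x).
Proof.
  assert (ha : a k = 6*k+1) by reflexivity.
  unfold H5. intros [H|[[i [Hi [HA|HB]]]|[HD|[[i [Hi [HC|HD]]]|HT]]]].
  - subst x. gcw 0 0.
  - unfold A in HA. destruct (Z.eqb_spec i (k-1)).
    + unfold Alast, setU, set3 in HA. destruct HA as [[E|[E|E]]|HI].
      * gcw (k-1) 0.
      * gcw k (3*k).
      * gcw k (3*k-2).
      * apply icc2E in HI. destruct HI as [t [Ht [E Ht2]]]. gcw k (3*k-3-t).
    + unfold Agen, setU, set3 in HA. destruct HA as [[E|[E|E]]|HI].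
      * gcw i 0.
      * gcw (i+1) (3*i+3).
      * gcw (i+1) (3*i+1).
      * apply icc2E in HI. destruct HI as [t [Ht [E Ht2]]]. gcw (i+1) (3*i-t).
  - unfold B in HB. destruct (Z.eqb_spec i (k-1)).
    + unfold Blast, setU, set3, Icc in HB. destruct HB as [[E|[E|E]]|[HI|[HI|HI]]].
      * gcw k 0.
      * gcw k (3*k).
      * gcw k (3*k-2).
      * apply icc2E in HI. destruct HI as [t [Ht [E Ht2]]]. gcw k (3*k-3-t).
      * assert (Z.of_nat x = (2*k+1)*a k - 6 \/ Z.of_nat x = (2*k+1)*a k - 5 \/ Z.of_nat x = (2*k+1)*a k - 4)
          as [E|[E|E]] by lia.
        -- gcw k 3.
        -- gcw (k+1) (3*k+3).
        -- gcw k 2.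
      * assert (Z.of_nat x = (2*k+1)*a k - 2 \/ Z.of_nat x = (2*k+1)*a k - 1 \/ Z.of_nat x = (2*k+1)*a k)
          as [E|[E|E]] by lia.
        -- gcw k 1.
        -- gcw (k+1) (3*k+1).
        -- gcw k 0.
    + unfold Bgen, setU, set3 in HB. destruct HB as [[E|[E|E]]|HI].
      * gcw (i+1) 0.
      * gcw (i+1) (3*i+3).
      * gcw (i+1) (3*i+1).
      * apply icc2E in HI. destruct HI as [t [Ht [E Ht2]]]. gcw (i+1) (3*i-t).
  - replace (Z.of_nat x) with ((2*k+1)*a k + (Z.of_nat x - (2*k+1)*a k)) by ring.
    apply CD_gc; try lia. unfold Dkk, setU, Icc in HD. split.
    + destruct HD as [HI|[HI|HI]]; [apply icc2E in HI; destruct HI as [t [Ht [E Ht2]]]|..]; lia.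
    + destruct HD as [HI|[HI|HI]].
      * apply icc2E in HI; destruct HI as [t [Ht [E Ht2]]]. left. exists t. lia.
      * right; left; lia.
      * right; right; lia.
  - replace (Z.of_nat x) with ((2*i+0)*a k + (Z.of_nat x - (2*i+0)*a k)) by ring.
    apply CD_gc; try lia. unfold C, setU, Icc in HC. split.
    + destruct HC as [HI|[HI|HI]]; [apply icc2E in HI; destruct HI as [t [Ht [E Ht2]]]|..]; lia.
    + destruct HC as [HI|[HI|HI]].
      * apply icc2E in HI; destruct HI as [t [Ht [E Ht2]]]. left. exists t. lia.
      * right; left; lia.
      * right; right; lia.
  - replace (Z.of_nat x) with ((2*i+1)*a k + (Z.of_nat x - (2*i+1)*a k)) by ring.
    apply CD_gc; try lia. unfold D, setU, Icc in HD. split.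
    + destruct HD as [HI|[HI|HI]]; [apply icc2E in HI; destruct HI as [t [Ht [E Ht2]]]|..]; lia.
    + destruct HD as [HI|[HI|HI]].
      * apply icc2E in HI; destruct HI as [t [Ht [E Ht2]]]. left. exists t. lia.
      * right; left; lia.
      * right; right; lia.
  - apply tail_gc; auto.
Qed.

Lemma gc_H5 k (hk : 2 <= k) x : Gc k (Z.of_nat x) -> H5 k x.
Proof.
  assert (ha : a k = 6*k+1) by reflexivity.
  intros [Q [e [HQ [He [He' [E|E]]]]]].
  -
    destruct (Z_le_gt_dec Q 0).
    + left. lia.
    + destruct (Z_le_gt_dec Q k).
      * right; left. exists (Q-1). split; [lia|].
        destruct (Z.eq_dec e 0).
        -- right. unfold B. destruct (Z.eqb_spec (Q-1) (k-1)).
           ++ unfold Blast, setU, set3. left; left. lia.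
           ++ unfold Bgen, setU, set3. left; left. lia.
        -- left. unfold A. destruct (Z.eqb_spec (Q-1) (k-1)).
           ++ unfold Alast, setU, set3.
              destruct (Z.eq_dec e (3*Q)); [left; right; left; lia|].
              destruct (Z.eq_dec e (3*Q-2)); [left; right; right; lia|].
              right. apply (icc2I _ _ _ (3*k-3-e)); lia.
           ++ unfold Agen, setU, set3.
              destruct (Z.eq_dec e (3*Q)); [left; right; left; lia|].
              destruct (Z.eq_dec e (3*Q-2)); [left; right; right; lia|].
              right. apply (icc2I _ _ _ (3*Q-3-e)); lia.
      * destruct (Z_le_gt_dec Q (2*k)).
        -- destruct (Z_le_gt_dec e (3*k)).
           ++ apply (CD_H5 k hk (Q-1) 1 x (a k - 2*e)); try lia.
              apply CDc_odd; lia.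
           ++ destruct (Z.eq_dec Q (k+1)).
              ** right; left. exists (k-1). split; [lia|]. right. unfold B.
                 rewrite Z.eqb_refl. unfold Blast, setU, set3, Icc.
                 right; right.
                 assert (e = 3*k+1 \/ e = 3*k+3) as [->| ->] by lia; [right|left]; lia.
              ** apply (CD_H5 k hk (Q-1) 0 x (2*a k - 2*e)); try lia.
                 apply CDc_even; lia.
        -- right; right; right; right. unfold Ici.
           assert (0 <= (Q - 2*k - 1) * (2*a k - 6)) by (apply Z.mul_nonneg_nonneg; lia). lia.
  -
    destruct (Z_le_gt_dec Q (k-1)).
    + right; left.
      destruct (Z.eq_dec e 0).
      * exists Q. split; [lia|]. left. unfold A. destruct (Z.eqb_spec Q (k-1)).
        -- unfold Alast, setU, set3. left; left. lia.
        -- unfold Agen, setU, set3. left; left. lia.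
      * exists (Q-1). split; [lia|]. right. unfold B. destruct (Z.eqb_spec (Q-1) (k-1)); [lia|].
        unfold Bgen, setU, set3.
        destruct (Z.eq_dec e (3*Q)); [left; right; left; lia|].
        destruct (Z.eq_dec e (3*Q-2)); [left; right; right; lia|].
        right. apply (icc2I _ _ _ (3*Q-3-e)); lia.
    + destruct (Z.eq_dec Q k).
      * subst Q. right; left. exists (k-1). split; [lia|]. right. unfold B.
        rewrite Z.eqb_refl. unfold Blast, setU, set3, Icc.
        destruct (Z.eq_dec e (3*k)); [left; right; left; lia|].
        destruct (Z.eq_dec e (3*k-2)); [left; right; right; lia|].
        destruct (Z_le_gt_dec e 1); [right; right; right; lia|].
        destruct (Z_le_gt_dec e 3); [right; right; left; lia|].
        right; left. apply (icc2I _ _ _ (3*k-3-e)); lia.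
      * destruct (Z_le_gt_dec Q (2*k)).
        -- destruct (Z_le_gt_dec e (3*k)).
           ++ destruct (Z.eq_dec Q (2*k)).
              ** right; right; right; right. unfold Ici. lia.
              ** apply (CD_H5 k hk Q 0 x (a k - 2*e)); try lia.
                 apply CDc_odd; lia.
           ++ apply (CD_H5 k hk (Q-1) 1 x (2*a k - 2*e)); try lia.
              apply CDc_even; lia.
        -- right; right; right; right. unfold Ici.
           assert (0 <= (Q - 2*k - 1) * (2*a k - 6)) by (apply Z.mul_nonneg_nonneg; lia). lia.
Qed.

Lemma part1 k (hk : 2 <= k) :
  (set_eq (C k (2*k-1))
     (setU (Icc ((4*k-2)*a k + 1) ((4*k-2)*a k + 3))
           (Icc ((4*k-2)*a k + 5) ((4*k-1)*a k))) /\
   set_eq (D k (2*k-1))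
     (setU (Icc ((4*k-1)*a k + 1) ((4*k-1)*a k + 3))
           (Icc ((4*k-1)*a k + 5) (4*k*a k)))).
Proof.
  assert (ha : a k = 6*k+1) by reflexivity.
  split; intro x; unfold C, D, setU, Icc, Icc2; split;
    intros H; repeat match goal with H : _ \/ _ |- _ => destruct H end;
    repeat match goal with H : _ /\ _ |- _ => destruct H end; try lia.
  all: right; left; lia.
Qed.

Ltac clr2 := repeat match goal with H : Icc2 _ _ _ |- _ => destruct H as [H _] end.
Ltac dsj := repeat match goal with H : _ \/ _ |- _ => destruct H end.

Ltac ltac_lt w1 w2 :=
  split; [exists (Z.to_nat w1) | split; [exists (Z.to_nat w2)|]];
  [ ..| intros x y Hx Hy; apply Nat2Z.inj_lt; unfold A, B, Alast, Blast, Agen, Bgen, Dkk, C, D, setU, set3, Icc in *;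
        dsj; clr2; lia ].

Lemma part5 k (hk : 2 <= k) :
  ((forall i, 0 <= i <= k - 1 -> set_lt (A k i) (B k i)) /\
   (forall i, 0 <= i <= k - 2 -> set_lt (B k i) (A k (i+1))) /\
   set_lt (B k (k-1)) (Dkk k) /\
   (forall i, k + 1 <= i <= 2*k - 1 -> set_lt (C k i) (D k i)) /\
   (forall i, k + 1 <= i <= 2*k - 2 -> set_lt (D k i) (C k (i+1)))).
Proof.
  assert (ha : a k = 6*k+1) by reflexivity.
  assert (hka : 0 <= (k-2) * a k) by (apply Z.mul_nonneg_nonneg; lia).
  split; [|split; [|split; [|split]]].
  - intros i Hi. assert (0 <= i * a k) by (apply Z.mul_nonneg_nonneg; lia).
    unfold A, B. destruct (Z.eqb_spec i (k-1)).
    + subst i. ltac_lt ((2*k-1)*a k) (2*k*a k).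
      * unfold Alast, setU, set3. left; left. lia.
      * unfold Blast, setU, set3. left; left. lia.
    + ltac_lt ((2*i+1)*a k) ((2*i+2)*a k).
      * unfold Agen, setU, set3. left; left. lia.
      * unfold Bgen, setU, set3. left; left. lia.
  - intros i Hi. assert (0 <= i * a k) by (apply Z.mul_nonneg_nonneg; lia).
    unfold A, B. destruct (Z.eqb_spec i (k-1)); [lia|].
    destruct (Z.eqb_spec (i+1) (k-1)).
    + ltac_lt ((2*i+2)*a k) ((2*k-1)*a k).
      * unfold Bgen, setU, set3. left; left. lia.
      * unfold Alast, setU, set3. left; left. lia.
    + ltac_lt ((2*i+2)*a k) ((2*(i+1)+1)*a k).
      * unfold Bgen, setU, set3. left; left. lia.
      * unfold Agen, setU, set3. left; left. lia.
  - unfold B. rewrite Z.eqb_refl. ltac_lt (2*k*a k) ((2*k+2)*a k).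
    * unfold Blast, setU, set3. left; left. lia.
    * unfold Dkk, setU, Icc. right; right. lia.
  - intros i Hi. assert (0 <= i * a k) by (apply Z.mul_nonneg_nonneg; lia).
    ltac_lt ((2*i+1)*a k) ((2*i+2)*a k).
    * unfold C, setU, Icc. right; right. lia.
    * unfold D, setU, Icc. right; right. lia.
  - intros i Hi. assert (0 <= i * a k) by (apply Z.mul_nonneg_nonneg; lia).
    ltac_lt ((2*i+2)*a k) ((2*(i+1)+1)*a k).
    * unfold D, setU, Icc. right; right. lia.
    * unfold C, setU, Icc. right; right. lia.
Qed.

Definition lvl1 k j r := exists q e, (j+1 = 2*q \/ j+1 = 2*q+1) /\ 0 <= e <= 3*q /\ e <> 3*q-1 /\ r = a k - 2*e.
Definition lvl2 k j r := exists q e, (j+2 = 2*q \/ j+2 = 2*q+1) /\ 0 <= e <= 3*q /\ e <> 3*q-1 /\ r = 2*a k - 2*e.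

Lemma gap k (hk : 2 <= k) j r : 0 <= j <= 4*k-1 -> 1 <= r <= a k -> Gc k (j * a k + r) -> lvl1 k j r \/ lvl2 k j r.
Proof.
  intros Hj Hr [Q [e [HQ [He [He' E]]]]]. assert (ha : a k = 6*k+1) by reflexivity.
  assert (exists s, 0 <= s <= 1 /\ j * a k + r = (2*Q+s)*a k - 2*e) as [s [Hs E2]].
  { destruct E as [E|E]; [exists 0|exists 1]; split; try lia; rewrite E; ring. }
  clear E.
  assert (s = 0 \/ s = 1) as [Hs0|Hs0] by lia.
  all: destruct (Z_le_gt_dec (2*Q+s) j);
    [ assert (0 <= (j - (2*Q+s)) * a k) by (apply Z.mul_nonneg_nonneg; lia); subst s; lia | ].
  all: destruct (Z.eq_dec j (2*Q+s-1)); [subst j; left; exists Q, e; subst s; lia|].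
  all: destruct (Z.eq_dec j (2*Q+s-2)); [subst j; right; exists Q, e; subst s; lia|].
  all: destruct (Z.eq_dec j (2*Q+s-3)); [subst j; left; exists (Q-1), (e - a k); subst s; lia|].
  all: assert (0 <= (2*Q+s - j - 4) * (a k - 3)) by (apply Z.mul_nonneg_nonneg; lia); subst s; lia.
Qed.

Definition Triple k X U V W : Prop :=
  X < U < V /\ V < W /\ Gc k U /\ Gc k V /\ Gc k W /\
  (forall Z, X < Z < U -> ~ Gc k Z) /\ (forall Z, U < Z < V -> ~ Gc k Z) /\
  (forall Z, V < Z < W -> ~ Gc k Z) /\
  (U - X) mod 3 <> 0 /\ (V - U) mod 3 <> 0 /\ (V - X) mod 3 <> 0.

Definition St k X : Prop :=
 (exists Q s, 1 <= Q <= k /\ 0 <= s <= 1 /\ (s = 0 \/ Q <= k-1) /\ X = (2*Q-1+s)*a k)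
 \/ (exists Q s t, 2 <= Q <= k /\ 0 <= s <= 1 /\ (s = 0 \/ Q <= k-1) /\ 0 <= t <= Q-2 /\
      X = (2*Q-1+s)*a k + a k - 6*Q + 6 + 6*t)
 \/ X = 2*k*a k
 \/ (exists t, 0 <= t <= k-3 /\ X = 2*k*a k + 7 + 6*t)
 \/ X = 2*k*a k + a k - 6
 \/ X = 2*k*a k + a k - 2
 \/ (exists Q s t, k+1 <= Q <= 2*k /\ 0 <= s <= 1 /\ (s = 1 \/ k+2 <= Q) /\ 0 <= t /\
      6*t <= 12*k - 6*Q - 6 /\ X = (2*Q-2+s)*a k + 1 + 6*t)
 \/ (exists Q s, k+1 <= Q <= 2*k /\ 0 <= s <= 1 /\ (s = 1 \/ k+2 <= Q) /\
      X = (2*Q-2+s)*a k + 12*k - 6*Q + 1)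
 \/ (exists Q s t, k+1 <= Q <= 2*k /\ 0 <= s <= 1 /\ (s = 1 \/ k+2 <= Q) /\ (s = 0 \/ Q <= 2*k-1) /\
      0 <= t /\ 12*k - 6*Q + 5 + 3*t + 2 <= a k /\ X = (2*Q-2+s)*a k + 12*k - 6*Q + 5 + 3*t)
 \/ (exists t, 0 <= t /\ X = (4*k-1)*a k + 5 + 3*t).

Ltac nogap k hk j :=
  let Z := fresh "Z" in let HZ := fresh "HZ" in let HG := fresh "HG" in
  intros Z HZ HG;
  replace Z with (j * a k + (Z - j * a k)) in HG by ring;
  apply (gap k hk) in HG; [ | lia | lia ];
  destruct HG as [[?q [?e [?Hq [?He [?He' ?Er]]]]]|[?q [?e [?Hq [?He [?He' ?Er]]]]]]; lia.

Ltac nogap0 := let Z := fresh "Z" in let HZ := fresh "HZ" in intros Z HZ; lia.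

Lemma next_low k (hk : 2 <= k) Q s : 1 <= Q <= k -> 0 <= s <= 1 -> (s = 0 \/ Q <= k-1) ->
  St k ((2*Q+s)*a k).
Proof.
  intros HQ Hs Hs2.
  assert (s = 0 \/ s = 1) as [ -> | -> ] by lia.
  - destruct (Z.eq_dec Q k).
    + subst Q. right; right; left. ring.
    + left. exists Q, 1. split; [lia|]. split; [lia|]. split; [lia|]. ring.
  - left. exists (Q+1), 0. split; [lia|]. split; [lia|]. split; [lia|]. ring.
Qed.

Lemma next_up k (hk : 2 <= k) Q s : k+1 <= Q <= 2*k -> 0 <= s <= 1 -> (s = 0 \/ Q <= 2*k-1) ->
  St k ((2*Q-1+s)*a k + 1).
Proof.
  intros HQ Hs Hs2.
  assert (s = 0 \/ s = 1) as [ -> | -> ] by lia.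
  - destruct (Z.eq_dec Q (2*k)).
    + subst Q. do 7 right. left. exists (2*k), 1. split; [lia|]. split; [lia|]. split; [lia|]. ring.
    + do 6 right. left. exists Q, 1, 0. repeat (split; [lia|]). ring.
  - destruct (Z.eq_dec Q (2*k-1)).
    + subst Q. do 7 right. left. exists (2*k), 0. split; [lia|]. split; [lia|]. split; [lia|]. ring.
    + do 6 right. left. exists (Q+1), 0, 0. repeat (split; [lia|]). ring.
Qed.

Ltac tri_split := unfold Triple;
  refine (conj _ (conj _ (conj _ (conj _ (conj _ (conj _ (conj _ (conj _ (conj _ (conj _ _))))))))));
  [ | | | | | | | | Z.to_euclidean_division_equations; lia
    | Z.to_euclidean_division_equations; lia | Z.to_euclidean_division_equations; lia ].

Lemma tri_K1 k (hk : 2 <= k) Q s : 1 <= Q <= k -> 0 <= s <= 1 -> (s = 0 \/ Q <= k-1) ->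
  exists U V W, Triple k ((2*Q-1+s)*a k) U V W /\ St k W.
Proof.
  intros HQ Hs Hs2. assert (ha : a k = 6*k+1) by reflexivity.
  destruct (Z.eq_dec Q 1).
  - exists ((2*Q-1+s)*a k + a k - 6*Q), ((2*Q-1+s)*a k + a k - 6*Q + 4), ((2*Q+s)*a k).
    split; [| apply next_low; lia].
    assert (s = 0 \/ s = 1) as [ -> | -> ] by lia; tri_split;
    try lia; try (gcw Q (3*Q)); try (gcw Q (3*Q-2)); try (gcw Q 0);
    nogap k hk (2*Q-1+0) || nogap k hk (2*Q-1+1).
  - exists ((2*Q-1+s)*a k + a k - 6*Q), ((2*Q-1+s)*a k + a k - 6*Q + 4), ((2*Q-1+s)*a k + a k - 6*Q + 6).
    split.
    + assert (s = 0 \/ s = 1) as [ -> | -> ] by lia; tri_split;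
      try lia; try (gcw Q (3*Q)); try (gcw Q (3*Q-2)); try (gcw Q (3*Q-3));
      nogap k hk (2*Q-1+0) || nogap k hk (2*Q-1+1).
    + right; left. exists Q, s, 0. repeat (split; [lia|]). ring.
Qed.

Lemma tri_K2 k (hk : 2 <= k) Q s t : 2 <= Q <= k -> 0 <= s <= 1 -> (s = 0 \/ Q <= k-1) -> 0 <= t <= Q-2 ->
  exists U V W, Triple k ((2*Q-1+s)*a k + a k - 6*Q + 6 + 6*t) U V W /\ St k W.
Proof.
  intros HQ Hs Hs2 Ht. assert (ha : a k = 6*k+1) by reflexivity.
  set (X := (2*Q-1+s)*a k + a k - 6*Q + 6 + 6*t).
  exists (X+2), (X+4), (X+6). unfold X. split.
  - assert (s = 0 \/ s = 1) as [ -> | -> ] by lia; tri_split;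
    try lia; try (gcw Q (3*Q-4-3*t)); try (gcw Q (3*Q-5-3*t)); try (gcw Q (3*Q-6-3*t));
    nogap k hk (2*Q-1+0) || nogap k hk (2*Q-1+1).
  - destruct (Z.eq_dec t (Q-2)).
    + replace ((2*Q-1+s)*a k + a k - 6*Q + 6 + 6*t + 6) with ((2*Q+s)*a k) by (subst t; ring).
      apply next_low; lia.
    + right; left. exists Q, s, (t+1). repeat (split; [lia|]). ring.
Qed.

Lemma tri_B1 k (hk : 2 <= k) : exists U V W, Triple k (2*k*a k) U V W /\ St k W.
Proof.
  assert (ha : a k = 6*k+1) by reflexivity.
  exists (2*k*a k + 1), (2*k*a k + 5), (2*k*a k + 7). split.
  - tri_split; try lia; try (gcw k (3*k)); try (gcw k (3*k-2)); try (gcw k (3*k-3)); nogap k hk (2*k).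
  - destruct (Z.eq_dec k 2).
    + right; right; right; right; left. lia.
    + right; right; right; left. exists 0. lia.
Qed.

Lemma tri_B2 k (hk : 2 <= k) t : 0 <= t <= k-3 -> exists U V W, Triple k (2*k*a k + 7 + 6*t) U V W /\ St k W.
Proof.
  intros Ht. assert (ha : a k = 6*k+1) by reflexivity.
  exists (2*k*a k + 9 + 6*t), (2*k*a k + 11 + 6*t), (2*k*a k + 13 + 6*t). split.
  - tri_split; try lia; try (gcw k (3*k-4-3*t)); try (gcw k (3*k-5-3*t)); try (gcw k (3*k-6-3*t)); nogap k hk (2*k).
  - destruct (Z.eq_dec t (k-3)).
    + right; right; right; right; left. lia.
    + right; right; right; left. exists (t+1). lia.
Qed.

Lemma tri_B3 k (hk : 2 <= k) : exists U V W, Triple k (2*k*a k + a k - 6) U V W /\ St k W.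
Proof.
  assert (ha : a k = 6*k+1) by reflexivity.
  exists (2*k*a k + a k - 5), (2*k*a k + a k - 4), (2*k*a k + a k - 2). split.
  - tri_split; try lia; try (gcw (k+1) (3*k+3)); try (gcw k 2); try (gcw k 1); nogap k hk (2*k).
  - do 5 right; left. lia.
Qed.

Lemma tri_B4 k (hk : 2 <= k) : exists U V W, Triple k (2*k*a k + a k - 2) U V W /\ St k W.
Proof.
  assert (ha : a k = 6*k+1) by reflexivity.
  exists (2*k*a k + a k - 1), (2*k*a k + a k), (2*k*a k + a k + 1). split.
  - tri_split; try lia; try (gcw (k+1) (3*k+1)); try (gcw k 0); try (gcw (k+1) (3*k)); nogap0.
  - do 6 right; left. exists (k+1), 1, 0. repeat (split; [lia|]). ring_simplify. lia.
Qed.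

Lemma tri_U1 k (hk : 2 <= k) Q s t : k+1 <= Q <= 2*k -> 0 <= s <= 1 -> (s = 1 \/ k+2 <= Q) -> 0 <= t ->
  6*t <= 12*k - 6*Q - 6 ->
  exists U V W, Triple k ((2*Q-2+s)*a k + 1 + 6*t) U V W /\ St k W.
Proof.
  intros HQ Hs Hs2 Ht Ht2. assert (ha : a k = 6*k+1) by reflexivity.
  exists ((2*Q-2+s)*a k + 3 + 6*t), ((2*Q-2+s)*a k + 5 + 6*t), ((2*Q-2+s)*a k + 7 + 6*t). split.
  - assert (s = 0 \/ s = 1) as [ -> | -> ] by lia; tri_split; try lia;
    try (first [gcw (Q-1) (3*k-3*t-1) | gcw Q (3*k-3*t-1)]);
    try (first [gcw (Q-1) (3*k-3*t-2) | gcw Q (3*k-3*t-2)]);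
    try (first [gcw (Q-1) (3*k-3*t-3) | gcw Q (3*k-3*t-3)]);
    nogap k hk (2*Q-2+0) || nogap k hk (2*Q-2+1).
  - destruct (Z_le_gt_dec (6*(t+1)) (12*k - 6*Q - 6)).
    + do 6 right; left. exists Q, s, (t+1). repeat (split; [lia|]). ring.
    + do 7 right; left. exists Q, s. repeat (split; [lia|]). lia.
Qed.

Lemma tri_U2 k (hk : 2 <= k) Q s : k+1 <= Q <= 2*k -> 0 <= s <= 1 -> (s = 1 \/ k+2 <= Q) ->
  exists U V W, Triple k ((2*Q-2+s)*a k + 12*k - 6*Q + 1) U V W /\ St k W.
Proof.
  intros HQ Hs Hs2. assert (ha : a k = 6*k+1) by reflexivity.
  exists ((2*Q-2+s)*a k + 12*k - 6*Q + 2), ((2*Q-2+s)*a k + 12*k - 6*Q + 3),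
         ((2*Q-2+s)*a k + 12*k - 6*Q + 5). split.
  - assert (s = 0 \/ s = 1) as [ -> | -> ] by lia; tri_split; try lia;
    try (gcw Q (3*Q));
    try (first [gcw (Q-1) (3*Q-3*k-1) | gcw Q (3*Q-3*k-1)]);
    try (first [gcw (Q-1) (3*Q-3*k-2) | gcw Q (3*Q-3*k-2)]);
    nogap k hk (2*Q-2+0) || nogap k hk (2*Q-2+1).
  - destruct (Z.eq_dec Q (2*k)); [destruct (Z.eq_dec s 1)|].
    + do 9 right. exists 0. subst. split; [lia|]. ring.
    + do 8 right; left. exists Q, s, 0. repeat (split; [lia|]). lia.
    + do 8 right; left. exists Q, s, 0. repeat (split; [lia|]). lia.
Qed.

Ltac upg k hk Q s :=
  match goal with |- Gc k ?Z =>
    replace Z with ((2*(Q-1)+s)*a k + (Z - (2*(Q-1)+s)*a k)) by ring;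
    apply (CD_gc k hk); [lia|lia|lia| split; [lia | right; right; lia]] end.

Lemma tri_U3 k (hk : 2 <= k) Q s t : k+1 <= Q <= 2*k -> 0 <= s <= 1 -> (s = 1 \/ k+2 <= Q) ->
  (s = 0 \/ Q <= 2*k-1) -> 0 <= t -> 12*k - 6*Q + 5 + 3*t + 2 <= a k ->
  exists U V W, Triple k ((2*Q-2+s)*a k + 12*k - 6*Q + 5 + 3*t) U V W /\ St k W.
Proof.
  intros HQ Hs Hs2 Hs3 Ht Ht2. assert (ha : a k = 6*k+1) by reflexivity.
  exists ((2*Q-2+s)*a k + 12*k - 6*Q + 6 + 3*t), ((2*Q-2+s)*a k + 12*k - 6*Q + 7 + 3*t),
         ((2*Q-2+s)*a k + 12*k - 6*Q + 8 + 3*t).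
  destruct (Z_le_gt_dec (12*k - 6*Q + 5 + 3*(t+1) + 2) (a k)).
  - split.
    + tri_split; try lia; try (upg k hk Q s); nogap0.
    + do 8 right; left. exists Q, s, (t+1). repeat (split; [lia|]). ring.
  - assert (E : (2*Q-2+s)*a k + 12*k - 6*Q + 8 + 3*t = (2*Q-1+s)*a k + 1) by lia.
    split.
    + tri_split; try lia; try (upg k hk Q s); try nogap0.
      rewrite E. assert (s = 0 \/ s = 1) as [ -> | -> ] by lia; gcw Q (3*k).
    + rewrite E. apply next_up; lia.
Qed.

Lemma tri_Tl k (hk : 2 <= k) t : 0 <= t -> exists U V W, Triple k ((4*k-1)*a k + 5 + 3*t) U V W /\ St k W.
Proof.
  intros Ht. assert (ha : a k = 6*k+1) by reflexivity.
  exists ((4*k-1)*a k + 6 + 3*t), ((4*k-1)*a k + 7 + 3*t), ((4*k-1)*a k + 8 + 3*t). split.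
  - tri_split; try lia; try (apply tail_gc; [lia|lia]); nogap0.
  - do 9 right. exists (t+1). lia.
Qed.

Lemma tri_St k (hk : 2 <= k) X : St k X -> exists U V W, Triple k X U V W /\ St k W.
Proof.
  intros [[Q [s [H1 [H2 [H3 ->]]]]]|[[Q [s [t [H1 [H2 [H3 [H4 ->]]]]]]]|[->|[[t [H1 ->]]|[->|[->|
    [[Q [s [t [H1 [H2 [H3 [H4 [H5 ->]]]]]]]]|[[Q [s [H1 [H2 [H3 ->]]]]]|
    [[Q [s [t [H1 [H2 [H3 [H4 [H5 [H6 ->]]]]]]]]]|[t [H1 ->]]]]]]]]]]].
  - apply tri_K1; auto.
  - apply tri_K2; auto.
  - apply tri_B1; auto.
  - apply tri_B2; auto.
  - apply tri_B3; auto.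
  - apply tri_B4; auto.
  - apply tri_U1; auto.
  - apply tri_U2; auto.
  - apply tri_U3; auto.
  - apply tri_Tl; auto.
Qed.

Lemma least_above (P : nat -> Prop) x : (exists y, (x < y)%nat /\ P y) ->
  exists y, ((x < y)%nat /\ P y) /\ forall z, (x < z)%nat /\ P z -> (y <= z)%nat.
Proof.
  intro H.
  destruct (dec_inh_nat_subset_has_unique_least_element (fun y => (x<y)%nat /\ P y) (fun n => classic _) H)
    as [y [[Hy Hmin] _]].
  exists y; split; auto.
Qed.

Definition nxt (P : nat -> Prop) (Hu : forall x, exists y, (x < y)%nat /\ P y) (x : nat) : nat :=
  proj1_sig (constructive_indefinite_description _ (least_above P x (Hu x))).

Lemma nxt_spec P Hu x : ((x < nxt P Hu x)%nat /\ P (nxt P Hu x)) /\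
  forall z, (x < z)%nat /\ P z -> (nxt P Hu x <= z)%nat.
Proof. unfold nxt. destruct (constructive_indefinite_description _ _) as [y Hy]. exact Hy. Qed.

Fixpoint genum P Hu (j : nat) : nat := match j with O => O | S j => nxt P Hu (genum P Hu j) end.

Lemma genum_S P Hu j : genum P Hu (S j) = nxt P Hu (genum P Hu j).
Proof. reflexivity. Qed.

Lemma nxt_eq P Hu x u : (x < u)%nat -> P u -> (forall z, (x < z < u)%nat -> ~ P z) -> nxt P Hu x = u.
Proof.
  intros H1 H2 H3. destruct (nxt_spec P Hu x) as [[A1 A2] A3].
  specialize (A3 u (conj H1 H2)).
  destruct (Nat.eq_dec (nxt P Hu x) u) as [e|ne]; auto.
  exfalso. apply (H3 (nxt P Hu x)); auto. lia.
Qed.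

Lemma genum_lt P Hu j : (genum P Hu j < genum P Hu (S j))%nat.
Proof. rewrite genum_S. apply (nxt_spec P Hu (genum P Hu j)). Qed.

Lemma genum_P P Hu j : P 0%nat -> P (genum P Hu j).
Proof. intro H0. destruct j; simpl; auto. apply (nxt_spec P Hu (genum P Hu j)). Qed.

Lemma genum_ge P Hu j : (j <= genum P Hu j)%nat.
Proof. induction j; [lia|]. pose proof (genum_lt P Hu j). lia. Qed.

Lemma genum_bracket P Hu x : exists j, (genum P Hu j <= x < genum P Hu (S j))%nat.
Proof.
  induction x.
  - exists O. pose proof (genum_lt P Hu O). simpl in *. lia.
  - destruct IHx as [j Hj].
    destruct (Nat.eq_dec (S x) (genum P Hu (S j))).
    + exists (S j). pose proof (genum_lt P Hu (S j)). lia.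
    + exists j. lia.
Qed.

Lemma genum_all P Hu x : P x -> exists j, genum P Hu j = x.
Proof.
  intro Hx. destruct (genum_bracket P Hu x) as [j Hj]. exists j.
  destruct (Nat.eq_dec (genum P Hu j) x) as [e|ne]; auto. exfalso.
  rewrite genum_S in Hj. destruct (nxt_spec P Hu (genum P Hu j)) as [_ A3].
  assert (Hlt : (genum P Hu j < x)%nat) by lia.
  specialize (A3 x (conj Hlt Hx)). lia.
Qed.

Lemma gen_ext (S1 S2 : nset) x : (forall y, S1 y -> S2 y) -> gen S1 x -> gen S2 x.
Proof. intros H G1. induction G1. apply gen0. apply gen_in; auto. apply gen_add; auto. Qed.

Lemma res_ne x u : (Z.of_nat u - Z.of_nat x) mod 3 <> 0 -> (x mod 3 <> u mod 3)%nat.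
Proof.
  intros H E. apply H. pose proof (f_equal Z.of_nat E) as E2. rewrite !Nat2Z.inj_mod in E2.
  Z.to_euclidean_division_equations. lia.
Qed.

Definition PG k (x : nat) : Prop := Gc k (Z.of_nat x).

Lemma PG_unb k (hk : 2 <= k) : forall x, exists y, (x < y)%nat /\ PG k y.
Proof.
  intro x. assert (ha : a k = 6*k+1) by reflexivity.
  exists (x + Z.to_nat ((4*k-1)*a k + 5))%nat. split.
  - assert (0 <= (4*k-1)*a k) by (apply Z.mul_nonneg_nonneg; lia). lia.
  - unfold PG. apply tail_gc; auto.
    assert (0 <= (4*k-1)*a k) by (apply Z.mul_nonneg_nonneg; lia). lia.
Qed.

Lemma nxt_triple k Hu x U V W : Triple k (Z.of_nat x) U V W ->
  Z.of_nat (nxt (PG k) Hu x) = U /\ Z.of_nat (nxt (PG k) Hu (nxt (PG k) Hu x)) = V /\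
  Z.of_nat (nxt (PG k) Hu (nxt (PG k) Hu (nxt (PG k) Hu x))) = W.
Proof.
  intros [H1 [H2 [HU [HV [HW [G1 [G2 [G3 _]]]]]]]].
  assert (E1 : nxt (PG k) Hu x = Z.to_nat U).
  { apply nxt_eq. lia. unfold PG. rewrite Z2Nat.id by lia. auto.
    intros z Hz. apply G1. lia. }
  assert (E2 : nxt (PG k) Hu (Z.to_nat U) = Z.to_nat V).
  { apply nxt_eq. lia. unfold PG. rewrite Z2Nat.id by lia. auto.
    intros z Hz. apply G2. lia. }
  assert (E3 : nxt (PG k) Hu (Z.to_nat V) = Z.to_nat W).
  { apply nxt_eq. lia. unfold PG. rewrite Z2Nat.id by lia. auto.
    intros z Hz. apply G3. lia. }
  rewrite E1, E2, E3. lia.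
Qed.

Lemma tri_first k (hk : 2 <= k) : Triple k (a k) (2*a k - 6) (2*a k - 2) (2*a k).
Proof.
  assert (ha : a k = 6*k+1) by reflexivity.
  tri_split; try lia; try (gcw 1 3); try (gcw 1 1); try (gcw 1 0); nogap k hk (1).
Qed.

Lemma first_gap k (hk : 2 <= k) : forall Z, 0 < Z < a k -> ~ Gc k Z.
Proof. assert (ha : a k = 6*k+1) by reflexivity. nogap k hk 0. Qed.

Lemma H5_G k (hk : 2 <= k) x : H5 k x <-> G k x.
Proof.
  split; intro H.
  - apply G_PQR; auto. apply PQR_Gc; auto. apply H5_gc; auto.
  - apply gc_H5; auto. apply PQR_Gc; auto. apply G_PQR; auto.
Qed.

Lemma chain k (hk : 2 <= k) m :
  St k (Z.of_nat (genum (PG k) (PG_unb k hk) (m*3+1))).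
Proof.
  assert (ha : a k = 6*k+1) by reflexivity.
  set (Hu := PG_unb k hk).
  induction m.
  - simpl. assert (E : nxt (PG k) Hu 0 = Z.to_nat (a k)).
    { apply nxt_eq. lia. unfold PG. rewrite Z2Nat.id by lia. gcw 0 0.
      intros z Hz. apply (first_gap k hk). lia. }
    rewrite E. left. exists 1, 0. rewrite Z2Nat.id by lia. lia.
  - destruct (tri_St k hk _ IHm) as [U [V [W [HT HS]]]].
    destruct (nxt_triple k Hu _ _ _ _ HT) as [_ [_ E3]].
    replace (S m * 3 + 1)%nat with (S (S (S (m*3+1))))%nat by lia.
    rewrite !genum_S. rewrite E3. auto.
Qed.

Lemma chain_res k (hk : 2 <= k) m :
  let g := genum (PG k) (PG_unb k hk) in
  (g (m*3+1) mod 3 <> g (m*3+2) mod 3 /\ g (m*3+2) mod 3 <> g (m*3+3) mod 3 /\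
   g (m*3+1) mod 3 <> g (m*3+3) mod 3)%nat.
Proof.
  intro g.
  destruct (tri_St k hk _ (chain k hk m)) as [U [V [W [HT HS]]]].
  destruct (nxt_triple k (PG_unb k hk) _ _ _ _ HT) as [E1 [E2 _]].
  replace (m*3+2)%nat with (S (m*3+1)) by lia.
  replace (m*3+3)%nat with (S (S (m*3+1))) by lia.
  unfold g. rewrite !genum_S.
  destruct HT as [_ [_ [_ [_ [_ [_ [_ [_ [R1 [R2 R3]]]]]]]]]].
  split; [|split]; apply res_ne; rewrite ?E1, ?E2; auto.
Qed.

Theorem lemma4p5 (k : Z) (hk : 2 <= k) :
  (* (1) *)
  (set_eq (C k (2*k-1))
     (setU (Icc ((4*k-2)*a k + 1) ((4*k-2)*a k + 3))
           (Icc ((4*k-2)*a k + 5) ((4*k-1)*a k))) /\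
   set_eq (D k (2*k-1))
     (setU (Icc ((4*k-1)*a k + 1) ((4*k-1)*a k + 3))
           (Icc ((4*k-1)*a k + 5) (4*k*a k)))) /\
  (* (2) *)
  (forall x : nat, G k x <->
     exists p q r : nat, (r <= q)%nat /\
       Z.of_nat x = (Z.of_nat p + 2 * Z.of_nat q) * a k + 4 * Z.of_nat r - 6 * Z.of_nat q) /\
  (* (3) *)
  set_sub (H5 k) (G k) /\
  (* (4) *)
  set_sub (G k) (H5 k) /\
  (* (5) *)
  ((forall i, 0 <= i <= k - 1 -> set_lt (A k i) (B k i)) /\
   (forall i, 0 <= i <= k - 2 -> set_lt (B k i) (A k (i+1))) /\
   set_lt (B k (k-1)) (Dkk k) /\
   (forall i, k + 1 <= i <= 2*k - 1 -> set_lt (C k i) (D k i)) /\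
   (forall i, k + 1 <= i <= 2*k - 2 -> set_lt (D k i) (C k (i+1)))) /\
  (* (6) *)
  perm_num_semigroup 3 (H5 k).
Proof.
  assert (ha : a k = 6*k+1) by reflexivity.
  split; [apply part1; auto|].
  split; [intro x; exact (G_PQR k hk x)|].
  split; [intros x Hx; apply H5_G; auto|].
  split; [intros x Hx; apply H5_G; auto|].
  split; [apply part5; auto|].
  set (Hu := PG_unb k hk). set (g := genum (PG k) Hu).
  assert (HP : forall x, H5 k x <-> PG k x).
  { intro x; split; intro H; [apply H5_gc; auto | apply gc_H5; auto]. }
  assert (Hg1 : Z.of_nat (g 1%nat) = a k).
  { unfold g. simpl. assert (E : nxt (PG k) Hu 0 = Z.to_nat (a k)).
    { apply nxt_eq. lia. unfold PG. rewrite Z2Nat.id by lia. gcw 0 0.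
      intros z Hz. apply (first_gap k hk). lia. }
    rewrite E. lia. }
  assert (Hg23 : Z.of_nat (g 2%nat) = 2 * a k - 6 /\ Z.of_nat (g 3%nat) = 2 * a k - 2).
  { assert (HT := tri_first k hk). rewrite <- Hg1 in HT.
    destruct (nxt_triple k Hu _ _ _ _ HT) as [E1 [E2 _]].
    change (g 2%nat) with (nxt (PG k) Hu (g 1%nat)).
    change (g 3%nat) with (nxt (PG k) Hu (nxt (PG k) Hu (g 1%nat))). lia. }
  destruct Hg23 as [Hg2 Hg3].
  split.
  - split.
    + split; [left; reflexivity|].
      intros x y Hx Hy. apply H5_G; auto. apply gen_add; apply H5_G; auto.
    + exists (seq 0 (Z.to_nat ((4*k-1)*a k + 5))). intros x Hx. apply in_seq. split; [lia|].
      destruct (le_lt_dec (Z.to_nat ((4*k-1)*a k + 5)) x) as [l|l]; [|lia].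
      exfalso. apply Hx. right; right; right; right. unfold Ici.
      assert (0 <= (4*k-1)*a k) by (apply Z.mul_nonneg_nonneg; lia). lia.
  - exists g. split; [intro j; apply genum_lt|].
    split.
    { intro x. rewrite HP. split.
      - apply genum_all.
      - intros [j <-]. apply genum_P. unfold PG. gcw 0 0. }
    split.
    { intro x. rewrite H5_G by auto. unfold G. split; apply gen_ext.
      - intros y Hy. unfold S3, set3, b, c in Hy.
        destruct Hy as [Hy|[Hy|Hy]]; [exists 1%nat|exists 2%nat|exists 3%nat]; split; try lia.
      - intros y [i [Hi Hy]]. subst y. unfold S3, set3, b, c.
        assert (i = 1 \/ i = 2 \/ i = 3)%nat as [ -> | [ -> | -> ] ] by lia; lia. }
    intros m r Hr.
    destruct (chain_res k hk m) as [R1 [R2 R3]]. fold Hu g in R1, R2, R3.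
    assert (B1 : (g (m*3+1) mod 3 < 3)%nat) by (apply Nat.mod_upper_bound; lia).
    assert (B2 : (g (m*3+2) mod 3 < 3)%nat) by (apply Nat.mod_upper_bound; lia).
    assert (B3 : (g (m*3+3) mod 3 < 3)%nat) by (apply Nat.mod_upper_bound; lia).
    assert (r = g (m*3+1) mod 3 \/ r = g (m*3+2) mod 3 \/ r = g (m*3+3) mod 3)%nat
      as [Er|[Er|Er]] by lia;
    [exists 1%nat|exists 2%nat|exists 3%nat]; (split; [split; [lia|auto]|]);
    intros i' [Hi' Hm]; assert (i' = 1 \/ i' = 2 \/ i' = 3)%nat as [ -> | [ -> | -> ] ] by lia; lia.
Qed.
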